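(* Let $L=L(m,n;k,l)$ be an $L$-shaped supergrid graph with $m-k=n-l=1$ and $l>1$, and let $s=(s_x,s_y)$, $t=(t_x,t_y)$ be distinct vertices of $L$. Then: (UB1) if $s_y,t_y\le l$, every simple path between $s$ and $t$ has at most $|t_y-s_y|+1$ vertices; (UB2) if $s_y<l$ and $t_x>1$, every simple path between $s$ and $t$ has at most $n-s_y+t_x$ vertices; (UB3) if $s_x=t_x=1$, $\max\{s_y,t_y\}=n$, and either $k>1$ or ($k=1$ and $\min\{s_y,t_y\}>1$), every simple path between $s$ and $t$ has at most $|t_y-s_y|+2$ vertices.
   Context: The infinite supergrid graph has as vertices all points $(x,y)\in\mathbb{Z}^2$, two distinct vertices $u,v$ being adjacent iff $|u_x-v_x|\le 1$ and $|u_y-v_y|\le 1$. For integers $m,n>1$ and $k,l\ge 1$ with $m-k\ge 1$, $n-l\ge 1$, $L(m,n;k,l)$ is the subgraph induced by $\{(x,y):1\le x\le m,\ 1\le y\le n\}\setminus\{(x,y): m-k+1\le x\le m,\ 1\le y\le l\}$. The length of a path is its number of vertices. *)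

(* Defs.v *)
(* Vertices of the supergrid are pairs of naturals (x, y);
   all vertices of L(m,n;k,l) have positive coordinates, so nat suffices. *)
From mathcomp Require Import all_boot.
Set Implicit Arguments. Unset Strict Implicit. Unset Printing Implicit Defensive.

Definition vertex := (nat * nat)%type.

Definition absdiff (a b : nat) : nat := (a - b) + (b - a).

Definition inL (m n k l : nat) (v : vertex) : bool :=
  [&& 1 <= v.1 <= m, 1 <= v.2 <= n &
      ~~ ((m - k + 1 <= v.1 <= m) && (1 <= v.2 <= l))].

Definition sadj (u v : vertex) : bool :=
  [&& u != v, absdiff u.1 v.1 <= 1 & absdiff u.2 v.2 <= 1].

(* p is a simple path in L(m,n;k,l) from s to t (listed as its vertex
   sequence); its length is size p (number of vertices). *)
Definition simple_path (m n k l : nat) (s t : vertex) (p : seq vertex) : bool :=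
  match p with
  | [::] => false
  | x :: q => [&& x == s, last x q == t, path sadj x q, uniq p
               & all (inL m n k l) p]
  end.

(* Main.v *)
Require Import Defs.
From mathcomp Require Import all_boot zify.
Set Implicit Arguments. Unset Strict Implicit.

Definition fL (n : nat) (v : vertex) : nat := if v.2 < n then v.2 else n + v.1 - 1.

Lemma inL_char m n k l (v : vertex) : m - k = 1 -> n - l = 1 -> inL m n k l v ->
  (v.2 < n /\ v.1 = 1 /\ 1 <= v.2) \/ (v.2 = n /\ 1 <= v.1 <= m).
Proof. case: v => x y /= H1 H2; rewrite /inL /=. lia. Qed.

Lemma fL_inj m n k l (u v : vertex) : m - k = 1 -> n - l = 1 ->
  inL m n k l u -> inL m n k l v -> fL n u = fL n v -> u = v.
Proof.
move=> H1 H2 /(inL_char H1 H2) Hu /(inL_char H1 H2) Hv.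
case: u Hu => x y; case: v Hv => x' y' /=; rewrite /fL /=.
case: (ltnP y n); case: (ltnP y' n) => ? ? ? ? E; congr pair; lia.
Qed.

Lemma step m n k l (u v : vertex) : m - k = 1 -> n - l = 1 ->
  inL m n k l u -> inL m n k l v -> sadj u v ->
  (fL n u <= fL n v + 1 /\ fL n v <= fL n u + 1) \/
  (fL n u + 2 = n + 1 /\ fL n v = n + 1) \/ (fL n v + 2 = n + 1 /\ fL n u = n + 1).
Proof.
move=> H1 H2 /(inL_char H1 H2) Hu /(inL_char H1 H2) Hv /and3P [_].
case: u Hu => x y; case: v Hv => x' y' /=; rewrite /fL /absdiff /=.
case: (ltnP y n); case: (ltnP y' n) => ? ? ? ? ? ?; lia.
Qed.

Lemma ivt m n k l x q c : m - k = 1 -> n - l = 1 ->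
  path sadj x q -> all (inL m n k l) (x :: q) -> c != n ->
  (fL n x <= c <= fL n (last x q)) \/ (fL n (last x q) <= c <= fL n x) ->
  exists2 v, v \in x :: q & fL n v = c.
Proof.
move=> H1 H2; elim: q x => [|y q IH] x /=.
  move=> _ _ _ H; exists x; rewrite ?inE //; lia.
case/andP=> Hxy Hp /and3P [Hx Hy Ha] Hc H.
have [Exc|Nxc] := eqVneq (fL n x) c; first by exists x; rewrite ?mem_head.
have := step H1 H2 Hx Hy Hxy => St.
have [Eyc|Nyc] := eqVneq (fL n y) c; first by exists y => //; rewrite !inE eqxx orbT.
have [v Hv Ev] : exists2 v, v \in y :: q & fL n v = c.
  apply: IH => //; first by rewrite /= Hy.
  move: Nxc Nyc => /eqP Nxc /eqP Nyc. lia.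
by exists v; rewrite // inE Hv orbT.
Qed.

Lemma inrange m n k l s t p c v : m - k = 1 -> n - l = 1 ->
  simple_path m n k l s t p -> c != n -> v \in p ->
  ((fL n s <= c) && (fL n t <= c) && (c < fL n v)) ||
  ((c <= fL n s) && (c <= fL n t) && (fL n v < c)) -> False.
Proof.
move=> H1 H2; case: p => [//|x q] /= /and5P [/eqP Ex /eqP Hl Hp Hu Ha] Hc Hv Hr; subst x.
case/splitPl: q / Hv Hp Hu Ha Hl => p1 p2 Hlv.
rewrite cat_path last_cat Hlv => /andP [Hp1 Hp2] Hu Ha Hl.
have Ha1 : all (inL m n k l) (s :: p1).
  by move: Ha; rewrite /= all_cat => /and3P [-> -> _].
have Hv : inL m n k l v.
  by move: Ha1 => /allP; apply; rewrite -Hlv mem_last.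
have Ha2 : all (inL m n k l) (v :: p2).
  by move: Ha; rewrite /= all_cat Hv => /and3P [_ _ ->].
have [a Ha0 Ea] := ivt H1 H2 Hp1 Ha1 Hc (ltac:(rewrite Hlv; lia)).
have [b Hb Eb] := ivt H1 H2 Hp2 Ha2 Hc (ltac:(rewrite Hl; lia)).
have Hb' : b \in p2.
  move: Hb; rewrite inE => /orP [/eqP E|//]; subst b; lia.
have Eab : a = b.
  apply: (fL_inj H1 H2) => //; first by move: Ha1 => /allP; apply; exact: Ha0.
  - by move: Ha2 => /allP; apply; rewrite inE Hb' orbT.
  - by rewrite Ea Eb.
rewrite -Eab in Hb'.
have Hu' : uniq ((s :: p1) ++ p2) by [].
move: Hu'; rewrite cat_uniq => /and3P [_ /hasP Hn _].
by apply: Hn; exists a.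
Qed.

Lemma bound m n k l s t p lo hi : m - k = 1 -> n - l = 1 ->
  simple_path m n k l s t p -> lo != n -> hi != n ->
  lo <= fL n s <= hi -> lo <= fL n t <= hi -> size p <= hi + 1 - lo.
Proof.
move=> H1 H2 Hs Hlo Hhi Hst Htt.
have Hall : all (inL m n k l) p.
  by case: p Hs => [//|x q] /= /and5P [].
have Hu : uniq p by case: p Hs Hall => [//|x q] /= /and5P [].
rewrite -(size_map (fL n)) -[hi + 1 - lo](size_iota lo).
apply: uniq_leq_size.
  rewrite map_inj_in_uniq // => u v Hu' Hv'; apply: (fL_inj H1 H2).
  - by move/allP: Hall; apply.
  - by move/allP: Hall; apply.
move=> z /mapP [v Hv ->]; rewrite mem_iota.
have A := inrange H1 H2 Hs Hhi Hv.
have B := inrange H1 H2 Hs Hlo Hv.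
apply/negPn/negP => C. move: Hst Htt C A B. lia.
Qed.

Theorem lemma10 (m n k l : nat) (s t : vertex) :
  1 < m -> 1 < n -> 1 <= k -> 1 <= l ->
  m - k = 1 -> n - l = 1 -> 1 < l ->
  inL m n k l s -> inL m n k l t -> s != t ->
  [/\ (s.2 <= l -> t.2 <= l ->
         forall p, simple_path m n k l s t p -> size p <= absdiff t.2 s.2 + 1),
      (s.2 < l -> 1 < t.1 ->
         forall p, simple_path m n k l s t p -> size p <= n - s.2 + t.1)
    & (s.1 = 1 -> t.1 = 1 -> maxn s.2 t.2 = n ->
         (1 < k \/ (k = 1 /\ 1 < minn s.2 t.2)) ->
         forall p, simple_path m n k l s t p -> size p <= absdiff t.2 s.2 + 2)].
Proof.
move=> Hm Hn Hk Hl H1 H2 Hl1 /(inL_char H1 H2) Hs /(inL_char H1 H2) Ht Hst.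
have Fs : fL n s = if s.2 < n then s.2 else n + s.1 - 1 by [].
have Ft : fL n t = if t.2 < n then t.2 else n + t.1 - 1 by [].
split.
- move=> A B p Hp.
  have := bound (lo := minn s.2 t.2) (hi := maxn s.2 t.2) H1 H2 Hp.
  rewrite /absdiff Fs Ft; case: ifP; case: ifP; lia.
- move=> A B p Hp.
  have := bound (lo := s.2) (hi := n + t.1 - 1) H1 H2 Hp.
  rewrite Fs Ft; case: ifP; case: ifP; lia.
- move=> A B C D p Hp.
  have E : s.2 <> t.2.
    move=> E; move/eqP: Hst; apply.
    by rewrite [s]surjective_pairing [t]surjective_pairing A B E.
  have := bound (lo := minn s.2 t.2) (hi := n + 1) H1 H2 Hp.
  rewrite /absdiff Fs Ft; case: ifP; case: ifP; lia.
Qed.
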